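(* Let $G$ be an edge-colored graph of order $n\ge 1$. If $e(G)+c(G)\geq \binom{n+1}{2}-1$ and $G$ contains no rainbow triangle, then $G$ belongs to $\mathcal{G}_0$.
   Context: An edge-colored graph is a finite simple graph $G$ with a map $C:E(G)\to\mathbb{N}$. $e(G)=|E(G)|$, $c(G)$ is the number of distinct colors appearing on $E(G)$. A subgraph is rainbow if all its edges have distinct colors, monochromatic if all its edges have the same color. For disjoint $S,S'\subseteq V(G)$, $G[S,S']$ is the bipartite subgraph with classes $S,S'$ and all edges of $G$ between $S$ and $S'$. The family $\mathcal{G}_0$ of edge-colored complete graphs is defined recursively: $K_1\in\mathcal{G}_0$; an edge-colored complete graph $G$ of order $n\ge 2$ belongs to $\mathcal{G}_0$ iff $c(G)=n-1$ and there is a partition $V(G)=V_1\cup V_2$ into nonempty sets such that $G[V_1,V_2]$ is monochromatic and $G[V_i]\in\mathcal{G}_0$ for $i=1,2$. *)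

(* Defs.v *)
From mathcomp Require Import all_boot.
Set Implicit Arguments. Unset Strict Implicit. Unset Printing Implicit Defensive.

(* An edge-colored finite simple graph on vertex type V: a symmetric irreflexive
   adjacency relation [adj] and a color map [col] (color of edge xy is col x y;
   col is required to be symmetric; its values on non-edges are irrelevant). *)
Definition simple_graph (V : finType) (adj : rel V) :=
  symmetric adj /\ irreflexive adj.

Definition sym_coloring (V : finType) (col : V -> V -> nat) :=
  forall x y, col x y = col y x.

Definition num_edges (V : finType) (adj : rel V) : nat :=
  #|[set [set p.1; p.2] | p in [set p : V * V | adj p.1 p.2]]|.

Definition colors_in (V : finType) (adj : rel V) (col : V -> V -> nat)
    (S : {set V}) : seq nat :=
  undup [seq col x y | x <- enum S, y <- [seq y <- enum S | adj x y]].

Definition num_colors (V : finType) (adj : rel V) (col : V -> V -> nat) : nat :=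
  size (colors_in adj col [set: V]).

Definition has_rainbow_triangle (V : finType) (adj : rel V)
    (col : V -> V -> nat) : Prop :=
  exists x y z : V, [/\ adj x y, adj y z & adj x z] /\
    [/\ col x y != col y z, col y z != col x z & col x y != col x z].

Definition complete_on (V : finType) (adj : rel V) (S : {set V}) : Prop :=
  forall x y, x \in S -> y \in S -> x != y -> adj x y.

Inductive inG0 (V : finType) (adj : rel V) (col : V -> V -> nat) :
    {set V} -> Prop :=
  | G0_single : forall S : {set V}, #|S| = 1 -> inG0 adj col S
  | G0_split : forall S S1 S2 : {set V},
      2 <= #|S| ->
      complete_on adj S ->
      size (colors_in adj col S) = #|S| - 1 ->
      S1 != set0 -> S2 != set0 -> [disjoint S1 & S2] -> S1 :|: S2 = S ->
      (exists c, forall x y, x \in S1 -> y \in S2 -> col x y = c) ->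
      inG0 adj col S1 -> inG0 adj col S2 ->
      inG0 adj col S.

Definition in_G0 (V : finType) (adj : rel V) (col : V -> V -> nat) : Prop :=
  complete_on adj [set: V] /\ inG0 adj col [set: V].

(* Main.v *)
Require Import Defs.
From mathcomp Require Import all_boot.
From mathcomp Require Import zify.
Set Implicit Arguments. Unset Strict Implicit. Unset Printing Implicit Defensive.

Section Main.
Variable V : finType.
Variable adj : rel V.
Variable col : V -> V -> nat.
Hypothesis Hsym : symmetric adj.
Hypothesis Hirr : irreflexive adj.
Hypothesis Hcol : sym_coloring col.
Hypothesis HnoR : ~ has_rainbow_triangle adj col.

Local Notation cl S := (colors_in adj col S).

Lemma memcl (S : {set V}) c : reflect (exists x y, [/\ x \in S, y \in S, adj x y & col x y = c]) (c \in cl S).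
Proof.
rewrite /colors_in mem_undup; apply: (iffP allpairsPdep).
  move=> [x [y [Hx Hy ->]]]; exists x, y; move: Hy; rewrite mem_filter mem_enum.
  by case/andP=> -> ->; rewrite -mem_enum.
move=> [x [y [Hx Hy Ha <-]]]; exists x, y; split=> //; first by rewrite mem_enum.
by rewrite mem_filter Ha mem_enum.
Qed.

Lemma cl_uniq (S : {set V}) : uniq (cl S).
Proof. exact: undup_uniq. Qed.

Lemma cl_sub (S T : {set V}) : S \subset T -> {subset cl S <= cl T}.
Proof.
move=> sST c /memcl [x [y [Hx Hy Ha Hc]]]; apply/memcl; exists x, y.
by split=> //; apply: (subsetP sST).
Qed.

Lemma size_cl_le (S T : {set V}) : S \subset T -> size (cl S) <= size (cl T).
Proof. move=> h; have := uniq_leq_size (cl_uniq S) (cl_sub h). exact. Qed.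

Lemma cl1 x : cl [set x] = [::].
Proof.
case E: (cl [set x]) => [|c s] //.
have : c \in cl [set x] by rewrite E inE eqxx.
case/memcl=> [a [b [Ha Hb Hab _]]].
by move: Ha Hb Hab; rewrite !inE => /eqP -> /eqP ->; rewrite Hirr.
Qed.

Definition U v (S : {set V}) := [seq c <- cl S | c \notin cl (S :\ v)].

Lemma U_uniq v (S : {set V}) : uniq (U v S).
Proof. exact: filter_uniq (cl_uniq _). Qed.

Lemma cl_split v (S : {set V}) : size (cl S) <= size (cl (S :\ v)) + size (U v S).
Proof.
have E := count_predC (fun c => c \in cl (S :\ v)) (cl S).
have E2 : size (U v S) = count (predC (fun c => c \in cl (S :\ v))) (cl S).
  by rewrite /U size_filter.
rewrite E2 -E; apply: leq_add => //.
rewrite -size_filter; apply: uniq_leq_size; first exact: filter_uniq (cl_uniq _).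
by move=> c; rewrite mem_filter => /andP[].
Qed.

Lemma U_unique v (S : {set V}) c x y : c \in U v S -> x \in S -> y \in S -> adj x y -> col x y = c ->
  x = v \/ y = v.
Proof.
rewrite mem_filter => /andP[Hn _] Hx Hy Ha Hc.
case: (eqVneq x v) => [->|nx]; first by left.
case: (eqVneq y v) => [->|ny]; first by right.
case/negP: Hn; apply/memcl; exists x, y; split=> //; by rewrite !inE ?nx ?ny.
Qed.

Lemma U_at v (S : {set V}) c : c \in U v S -> exists y, [/\ y \in S, adj v y & col v y = c].
Proof.
move=> hU; have := hU; rewrite mem_filter => /andP[_ /memcl [x [y [Hx Hy Ha Hc]]]].
case: (U_unique hU Hx Hy Ha Hc) => E; subst.
  by exists y.
by exists x; rewrite Hsym Hcol.
Qed.

Lemma U_indep v (S : {set V}) c1 c2 y1 y2 : c1 \in U v S -> c2 \in U v S -> c1 != c2 ->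
  y1 \in S -> y2 \in S -> adj v y1 -> adj v y2 -> col v y1 = c1 -> col v y2 = c2 ->
  ~~ adj y1 y2.
Proof.
move=> h1 h2 n12 Hy1 Hy2 a1 a2 e1 e2; apply/negP => a12.
have c3S : col y1 y2 \in cl S by apply/memcl; exists y1, y2.
have c3U : col y1 y2 \notin U v S.
  apply/negP=> h; case: (U_unique h Hy1 Hy2 a12 erefl) => E; subst.
    by rewrite Hirr in a1.
  by rewrite Hirr in a2.
apply: HnoR; exists v, y1, y2; split; first by split.
split.
- by rewrite e1; apply/eqP=> E; rewrite -E h1 in c3U.
- by rewrite e2; apply/eqP=> E; rewrite E h2 in c3U.
- by rewrite e1 e2.
Qed.

Lemma complete_sub (S T : {set V}) : T \subset S -> complete_on adj S -> complete_on adj T.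
Proof. by move=> sTS cS x y Hx Hy; apply: cS; apply: (subsetP sTS). Qed.

Lemma U_le1 v (S : {set V}) : complete_on adj (S :\ v) -> size (U v S) <= 1.
Proof.
move=> cS; case E: (U v S) => [|c1 [|c2 s]] //.
have := U_uniq v S; rewrite E /= inE negb_or -andbA => /and3P[n12 _ _].
have h1 : c1 \in U v S by rewrite E inE eqxx.
have h2 : c2 \in U v S by rewrite E !inE eqxx orbT.
have [y1 [Hy1 a1 e1]] := U_at h1.
have [y2 [Hy2 a2 e2]] := U_at h2.
have /negP H := U_indep h1 h2 n12 Hy1 Hy2 a1 a2 e1 e2; exfalso; apply: H; apply: cS.
- rewrite !inE Hy1 andbT; apply/eqP=> E1; subst; by rewrite Hirr in a1.
- rewrite !inE Hy2 andbT; apply/eqP=> E1; subst; by rewrite Hirr in a2.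
- by apply/eqP=> E1; subst; rewrite eqxx in n12.
Qed.

Lemma complete_cl_aux n (S : {set V}) : #|S| = n.+1 -> complete_on adj S -> size (cl S) < #|S|.
Proof.
elim: n S => [|n IH] S hS cS.
  have /cards1P [x Ex] : #|S| == 1 by rewrite hS.
  by rewrite Ex cl1 cards1.
have : 0 < #|S| by rewrite hS.
rewrite card_gt0 => /set0Pn [v vS].
have hS' : #|S :\ v| = n.+1 by move: hS; rewrite (cardsD1 v) vS => -[].
have cS' : complete_on adj (S :\ v) by apply: complete_sub cS; apply: subsetDl.
have := IH _ hS' cS'; have := cl_split v S; have := U_le1 cS'.
rewrite hS hS'; lia.
Qed.

Lemma complete_cl (S : {set V}) : S != set0 -> complete_on adj S -> size (cl S) < #|S|.
Proof.
rewrite -card_gt0 => h; apply: (@complete_cl_aux (#|S|.-1)); lia.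
Qed.


Lemma no_rb x y z : adj x y -> adj y z -> adj x z -> col x y != col y z ->
  col y z != col x z -> col x y = col x z.
Proof.
move=> a1 a2 a3 n1 n2; apply/eqP/negPn/negP => n3.
by apply: HnoR; exists x, y, z.
Qed.

Lemma disj_of (A B : {set V}) : (forall x, x \in A -> x \in B -> False) -> [disjoint A & B].
Proof.
move=> h; rewrite -setI_eq0; apply/eqP/setP=> x; rewrite !inE.
by apply/negbTE/andP=> -[]; apply: h.
Qed.

Lemma disj_not (A B : {set V}) x : [disjoint A & B] -> x \in A -> x \in B -> False.
Proof.
move/disjoint_setI0/setP/(_ x); rewrite !inE => E xA xB.
by rewrite xA xB in E.
Qed.

Definition mono_split (S S1 S2 : {set V}) :=
  [/\ S1 != set0, S2 != set0, [disjoint S1 & S2], S1 :|: S2 = S &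
      exists c, forall x y, x \in S1 -> y \in S2 -> col x y = c].

Lemma split_aux n (S : {set V}) : #|S| = n.+2 -> complete_on adj S ->
  #|S| - 1 <= size (cl S) -> exists S1 S2, mono_split S S1 S2.
Proof.
elim: n S => [|n IH] S hS cS hc;
  (have : 0 < #|S| by rewrite hS); rewrite card_gt0 => /set0Pn [v vS];
  (have hS' : #|S :\ v| = #|S| - 1 by rewrite (cardsD1 v S) vS /=; lia);
  rewrite hS /= subn1 /= in hS';
  have cS' : complete_on adj (S :\ v) by apply: complete_sub cS; apply: subsetDl.
  have /cards1P [w Ew] : #|S :\ v| == 1 by rewrite hS'.
  exists [set v], (S :\ v); split.
  - by apply/set0Pn; exists v; rewrite inE.
  - by rewrite -card_gt0 hS'.
  - by rewrite disjoints1 !inE eqxx.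
  - exact: setD1K.
  - exists (col v w) => x y; rewrite Ew !inE => /eqP -> /eqP ->; done.
have hc' : #|S :\ v| - 1 <= size (cl (S :\ v)).
  have := cl_split v S; have := U_le1 cS'; move: hc; rewrite hS hS'; lia.
have [T1 [T2 [nT1 nT2 dT uT [b Hb]]]] := IH _ hS' cS' hc'.
have T1S : forall x, x \in T1 -> x \in S /\ x != v.
  move=> x xT; have : x \in S :\ v by rewrite -uT in_setU xT.
  by rewrite !inE => /andP[h1 h2]; split.
have T2S : forall x, x \in T2 -> x \in S /\ x != v.
  move=> x xT; have : x \in S :\ v by rewrite -uT in_setU xT orbT.
  by rewrite !inE => /andP[h1 h2]; split.
have vT2 : v \notin T2 by apply/negP => /T2S [_]; rewrite eqxx.
have vT1 : v \notin T1 by apply/negP => /T1S [_]; rewrite eqxx.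
have U' : v |: (T1 :|: T2) = S by rewrite uT setD1K.
case: (boolP [forall t in T2, col v t == b]) => [/forall_inP hA|].
  exists (v |: T1), T2; split => //.
  - by apply/set0Pn; exists v; rewrite !inE eqxx.
  - apply: disj_of => x; case/setU1P => [->|xT1] xT2; first by rewrite xT2 in vT2.
    exact: disj_not dT xT1 xT2.
  - by rewrite -setUA.
  - exists b => x y; case/setU1P => [->|xT1] yT2; first by apply/eqP/hA.
    exact: Hb.
move=> nA.
case: (boolP [forall t in T1, col v t == b]) => [/forall_inP hB|].
  exists T1, (v |: T2); split => //.
  - by apply/set0Pn; exists v; rewrite !inE eqxx.
  - apply: disj_of => x xT1; case/setU1P => [E|xT2]; first by subst; rewrite xT1 in vT1.
    exact: disj_not dT xT1 xT2.
  - by rewrite setUCA.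
  - exists b => x y xT1; case/setU1P => [->|yT2]; last exact: Hb.
    by rewrite Hcol; apply/eqP/hB.
move=> nB.
move: nA; rewrite negb_forall => /existsP [t2]; rewrite negb_imply => /andP[t2T2 nt2].
move: nB; rewrite negb_forall => /existsP [t1]; rewrite negb_imply => /andP[t1T1 nt1].
have [t2S t2v] := T2S _ t2T2.
have [t1S t1v] := T1S _ t1T1.
have adjv : forall y, y \in S -> y != v -> adj v y.
  by move=> y yS yv; apply: cS => //; rewrite eq_sym.
set d := col v t1.
have C2 : forall y, y \in T2 -> col v y = d \/ col v y = b.
  move=> y yT2; have [yS yv] := T2S _ yT2.
  case: (eqVneq (col v y) b) => [->|nb]; first by right.
  left; have ty : t1 != y by apply/eqP=> E; subst; exact: disj_not dT t1T1 yT2.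
  apply/esym; apply: no_rb.
  - exact: adjv.
  - exact: cS.
  - exact: adjv.
  - by rewrite (Hb t1 y).
  - by rewrite (Hb t1 y) // eq_sym.
have hd2 : col v t2 = d by case: (C2 _ t2T2) => // E; rewrite E eqxx in nt2.
have C1 : forall y, y \in T1 -> col v y = d \/ col v y = b.
  move=> y yT1; have [yS yv] := T1S _ yT1.
  case: (eqVneq (col v y) b) => [->|nb]; first by right.
  left; have ty : t2 != y by apply/eqP=> E; subst; exact: disj_not dT yT1 t2T2.
  rewrite -hd2; apply/esym; apply: no_rb.
  - exact: adjv.
  - exact: cS.
  - exact: adjv.
  - by rewrite (Hcol t2 y) (Hb y t2).
  - by rewrite (Hcol t2 y) (Hb y t2) // eq_sym.
have CS : forall y, y \in S :\ v -> col v y = d \/ col v y = b.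
  by move=> y; rewrite -uT => /setUP [/C1|/C2].
have t1S' : t1 \in S :\ v by rewrite -uT in_setU t1T1.
have t2S' : t2 \in S :\ v by rewrite -uT in_setU t2T2 orbT.
have t12 : t1 != t2 by apply/eqP=> E; subst; exact: disj_not dT t1T1 t2T2.
have bS' : b \in cl (S :\ v).
  by apply/memcl; exists t1, t2; split => //; [apply: cS'|apply: Hb].
have dS' : d \notin cl (S :\ v).
  case: (boolP (all (fun c => c \in cl (S :\ v)) (cl S))) => [/allP hall|/allPn [c0 c0S c0n]].
    have a1 := uniq_leq_size (cl_uniq S) hall.
    have ne : S :\ v != set0 by rewrite -card_gt0 hS'.
    have a2 := complete_cl ne cS'.
    exfalso; move: a1 a2 hc; rewrite hS hS'.
    move: (size (cl S)) (size (cl (S :\ v))) => p q; clear; lia.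
  have c0U : c0 \in U v S by rewrite mem_filter c0n c0S.
  have [y [yS ay ey]] := U_at c0U.
  have yS' : y \in S :\ v.
    by rewrite !inE yS andbT; apply/eqP => E; subst; rewrite Hirr in ay.
  case: (CS _ yS') => E; first by rewrite -E ey.
  by rewrite ey in E; rewrite E bS' in c0n.
pose B := [set x in S :\ v | col v x == b].
pose A := [set x in S :\ v | col v x != b].
case: (eqVneq B set0) => [B0|Bn].
  exists [set v], (S :\ v); split.
  - by apply/set0Pn; exists v; rewrite inE.
  - by rewrite -card_gt0 hS'.
  - by rewrite disjoints1 !inE eqxx.
  - exact: setD1K.
  - exists d => x y; rewrite inE => /eqP -> yS'; case: (CS _ yS') => // E.
    have : y \in B by rewrite inE yS' E eqxx.
    by rewrite B0 inE.
exists B, (v |: A); split => //.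
- by apply/set0Pn; exists v; rewrite !inE eqxx.
- apply: disj_of => x; rewrite !inE => /andP[/andP[xv xS] xb].
  case/orP => [/eqP E| /andP[_ nb]]; first by rewrite E eqxx in xv.
  by rewrite xb in nb.
- apply/setP => x; rewrite !inE; case: (eqVneq x v) => [->|xv] /=; first by rewrite vS.
  by case: (x \in S); case: (col v x == b).
- exists b => x y; rewrite inE => /andP[xS' xb]; case/setU1P => [->|yA].
    by rewrite Hcol; apply/eqP.
  move: yA; rewrite inE => /andP[yS' yb].
  have yd : col v y = d by case: (CS _ yS') => // E; rewrite E eqxx in yb.
  case: (eqVneq (col x y) b) => // nxy; exfalso.
  move: (xS') (yS'); rewrite !inE => /andP[xv xS] /andP[yv yS].
  have xy : x != y by apply/eqP => E; subst; rewrite xb in yb.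
  have := @no_rb v x y (adjv _ xS xv) (cS _ _ xS yS xy) (adjv _ yS yv).
  have -> : col v x = b by apply/eqP.
  rewrite eq_sym nxy => /(_ isT).
  have nn : col x y != col v y.
    rewrite yd; apply/eqP => E; rewrite -E in dS'.
    by move/negP: dS'; apply; apply/memcl; exists x, y; split => //; apply: cS'.
  by move=> /(_ nn) E; rewrite -E eqxx in yb.
Qed.

Lemma G0_aux n (S : {set V}) : #|S| <= n.+1 -> 0 < #|S| -> complete_on adj S ->
  #|S| - 1 <= size (cl S) -> inG0 adj col S.
Proof.
elim: n S => [|n IH] S hle hpos cS hc.
  by apply: G0_single; apply/eqP; rewrite eqn_leq hle hpos.
case: (eqVneq #|S| 1) => [h1|h1]; first exact: G0_single.
have h2 : #|S| = (#|S| - 2).+2 by move: hpos h1; clear; lia.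
have [S1 [S2 [n1 n2 dS uS [c Hc]]]] := split_aux h2 cS hc.
have cardS : #|S| = #|S1| + #|S2|.
  by rewrite -uS cardsU (disjoint_setI0 dS) cards0 subn0.
have p1 : 0 < #|S1| by rewrite card_gt0.
have p2 : 0 < #|S2| by rewrite card_gt0.
have s1 : S1 \subset S by rewrite -uS subsetUl.
have s2 : S2 \subset S by rewrite -uS subsetUr.
have c1 := complete_sub s1 cS.
have c2 := complete_sub s2 cS.
have b1 := complete_cl n1 c1.
have b2 := complete_cl n2 c2.
have ne0 : S != set0 by rewrite -card_gt0.
have b0 := complete_cl ne0 cS.
have sub : {subset cl S <= cl S1 ++ cl S2 ++ [:: c]}.
  move=> z /memcl [x [y [xS yS axy <-]]].
  rewrite !mem_cat inE.
  move: xS yS; rewrite -uS => /setUP [xS|xS] /setUP [yS|yS].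
  - by apply/orP; left; apply/memcl; exists x, y.
  - by rewrite Hc ?eqxx ?orbT.
  - by rewrite Hcol Hc ?eqxx ?orbT.
  - by apply/orP; right; apply/orP; left; apply/memcl; exists x, y.
have sz := uniq_leq_size (cl_uniq S) sub.
rewrite !size_cat /= in sz.
have e1 : #|S1| - 1 <= size (cl S1).
  move: sz b0 b1 b2 hc; rewrite cardS.
  move: (size (cl S)) (size (cl S1)) (size (cl S2)) #|S1| #|S2| => a b d e f; clear; lia.
have e2 : #|S2| - 1 <= size (cl S2).
  move: sz b0 b1 b2 hc; rewrite cardS.
  move: (size (cl S)) (size (cl S1)) (size (cl S2)) #|S1| #|S2| => a b d e f; clear; lia.
apply: (@G0_split _ _ _ S S1 S2) => //.
- by rewrite h2.
- move: b0 hc; move: (size (cl S)) #|S| => a b; clear; lia.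
- by exists c.
- apply: IH => //; move: hle; rewrite cardS; move: p2; clear; lia.
- apply: IH => //; move: hle; rewrite cardS; move: p1; clear; lia.
Qed.

Definition EP (S : {set V}) := [set p : V * V | [&& p.1 \in S, p.2 \in S & adj p.1 p.2]].
Definition eS (S : {set V}) := #|[set [set p.1; p.2] | p in EP S]|.
Definition deg x (S : {set V}) := #|[set y in S | adj x y]|.

Lemma deg_le x (S : {set V}) : deg x S <= #|S :\ x|.
Proof.
apply: subset_leq_card; apply/subsetP => y; rewrite !inE => /andP[yS axy].
rewrite yS andbT; apply/eqP => E; subst; by rewrite Hirr in axy.
Qed.

Lemma eS1 x : eS [set x] = 0.
Proof.
apply/eqP; rewrite /eS cards_eq0; apply/eqP.
have -> : EP [set x] = set0.
  apply/setP => -[a b]; rewrite !inE /=.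
  by apply/negbTE; apply/negP => /and3P[/eqP -> /eqP ->]; rewrite Hirr.
exact: imset0.
Qed.

Lemma eS_split v (S : {set V}) : eS S <= eS (S :\ v) + deg v S.
Proof.
rewrite /eS /deg.
set I1 := [set [set p.1; p.2] | p in EP (S :\ v)].
set I2 := [set [set v; y] | y in [set y in S | adj v y]].
have sub : [set [set p.1; p.2] | p in EP S] \subset I1 :|: I2.
  apply/subsetP => z /imsetP [[a b]]; rewrite !inE /= => /and3P[aS bS ab] ->.
  case: (eqVneq a v) => [E|av].
    subst; apply/orP; right; apply/imsetP; exists b => //; by rewrite inE bS ab.
  case: (eqVneq b v) => [E|bv].
    subst; apply/orP; right; apply/imsetP; exists a; first by rewrite inE aS Hsym.
    by rewrite setUC.
  apply/orP; left; apply/imsetP; exists (a, b) => //.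
  by rewrite !inE /= av bv aS bS ab.
apply: (leq_trans (subset_leq_card sub)).
rewrite cardsU; apply: leq_trans (leq_subr _ _) _.
by rewrite leq_add2l leq_imset_card.
Qed.

Lemma key_deg (S : {set V}) v : v \in S -> (forall u, u \in S -> deg v S <= deg u S) ->
  deg v S + size (U v S) <= #|S|.
Proof.
move=> vS vmin.
have dl := deg_le v S.
have cS : #|S| = #|S :\ v|.+1 by rewrite (cardsD1 v S) vS.
case E: (U v S) => [|c1 s].
  by rewrite addn0 cS ltnW // ltnS.
have h1 : c1 \in U v S by rewrite E inE eqxx.
have [y1 [y1S ay1 ey1]] := U_at h1.
pose R := [set y in S | adj v y && (col v y \in U v S) && (col v y != c1)].
have sR : size [seq c <- U v S | c != c1] <= #|R|.
  rewrite cardE -(size_map (col v)); apply: uniq_leq_size.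
    exact: filter_uniq (U_uniq _ _).
  move=> c; rewrite mem_filter => /andP[nc cU].
  have [y [yS ay ey]] := U_at cU.
  by apply/mapP; exists y => //; rewrite mem_enum inE yS ay ey cU nc.
have sU : size (U v S) = (size [seq c <- U v S | c != c1]).+1.
  have := count_predC (pred1 c1) (U v S).
  rewrite (count_uniq_mem _ (U_uniq _ _)) h1 => <-.
  by rewrite add1n size_filter.
pose N1 := [set y in S | adj y1 y].
have dj : [disjoint N1 & y1 |: R].
  apply: disj_of => z; rewrite !inE => /andP[zS az]; case/orP => [/eqP E1|].
    by subst; rewrite Hirr in az.
  case/and3P => _ /andP[avz czU] nz.
  have n1z : c1 != col v z by rewrite eq_sym.
  have := U_indep h1 czU n1z y1S zS ay1 avz ey1 erefl.
  by rewrite az.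
have y1R : y1 \notin R by rewrite !inE ey1 eqxx !andbF.
have sub : N1 :|: (y1 |: R) \subset S.
  apply/subsetP => z; rewrite !inE; case/orP => [/andP[-> _] //|].
  by case/orP => [/eqP -> //| /and3P[-> _ _]].
have := subset_leq_card sub.
rewrite cardsU (disjoint_setI0 dj) cards0 subn0 cardsU1 y1R /=.
have dv : deg v S <= #|N1| by apply: vmin.
move: dv sR sU; rewrite E => dv sR sU.
move: sU => /= sU; rewrite sU; move: (deg v S) #|N1| #|R| (size [seq c <- c1 :: s | c != c1]) #|S| dv sR.
by move=> a b c d e; clear; lia.
Qed.

Lemma bound_aux n (S : {set V}) : #|S| = n.+1 ->
  eS S + size (cl S) + 1 <= 'C(n.+2, 2) /\
  ('C(n.+2, 2) <= eS S + size (cl S) + 1 -> complete_on adj S /\ #|S| - 1 <= size (cl S)).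
Proof.
elim: n S => [|n IH] S hS.
  have /cards1P [x Ex] : #|S| == 1 by rewrite hS.
  subst S; rewrite eS1 cl1 cards1 /=; split => // _; split => // a b.
  by rewrite !inE => /eqP -> /eqP ->; rewrite eqxx.
have : 0 < #|S| by rewrite hS.
rewrite card_gt0 => /set0Pn [v0 v0S].
have [v vS0 vmin0] := arg_minnP (fun u => deg u S) v0S.
have vS : v \in S by [].
have vmin : forall u, u \in S -> deg v S <= deg u S by [].
clear vS0 vmin0.
have hS' : #|S :\ v| = n.+1 by move: hS; rewrite (cardsD1 v S) vS add1n => -[].
have [bd eqc] := IH _ hS'.
have kd := key_deg vS vmin.
have es := eS_split v S.
have cs := cl_split v S.
have dl := deg_le v S.
rewrite hS in kd; rewrite hS' in dl.
have bC : 'C(n.+3, 2) = 'C(n.+2, 2) + n.+2 by rewrite binS bin1.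
rewrite bC; split.
  move: bd kd es cs; move: (eS S) (eS (S :\ v)) (size (cl S)) (size (cl (S :\ v)))
    (deg v S) (size (U v S)) ('C(n.+2, 2)) => a b c d e f g; clear; lia.
move=> heq.
have heq' : 'C(n.+2, 2) <= eS (S :\ v) + size (cl (S :\ v)) + 1.
  move: heq kd es cs; move: (eS S) (eS (S :\ v)) (size (cl S)) (size (cl (S :\ v)))
    (deg v S) (size (U v S)) ('C(n.+2, 2)) => a b c d e f g; clear; lia.
have [cS' hc'] := eqc heq'.
have k1 := U_le1 cS'.
rewrite hS' in hc'; rewrite hS.
have hd : n.+1 <= deg v S.
  move: heq bd kd es cs k1; move: (eS S) (eS (S :\ v)) (size (cl S)) (size (cl (S :\ v)))
    (deg v S) (size (U v S)) ('C(n.+2, 2)) => a b c d e f g; clear; lia.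
split; last first.
  move: heq bd es dl hc'; move: (eS S) (eS (S :\ v)) (size (cl S)) (size (cl (S :\ v)))
    (deg v S) ('C(n.+2, 2)) => a b c d e g; clear; lia.
have Nv : [set y in S | adj v y] = S :\ v.
  apply/eqP; rewrite eqEcard; apply/andP; split; last by rewrite hS'.
  apply/subsetP => y; rewrite !inE => /andP[yS ay]; rewrite yS andbT.
  by apply/eqP => E; subst; rewrite Hirr in ay.
have av : forall y, y \in S -> y != v -> adj v y.
  move=> y yS yv; have : y \in S :\ v by rewrite !inE yS yv.
  by rewrite -Nv inE => /andP[].
move=> x y xS yS xy.
case: (eqVneq x v) => [E|xv]; first by subst; apply: av => //; rewrite eq_sym.
case: (eqVneq y v) => [E|yv]; first by subst; rewrite Hsym; apply: av.
by apply: cS' => //; rewrite !inE ?xv ?yv.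
Qed.

End Main.

Theorem theorem2 (V : finType) (adj : rel V) (col : V -> V -> nat) :
  simple_graph adj -> sym_coloring col ->
  1 <= #|V| ->
  'C(#|V|.+1, 2) - 1 <= num_edges adj + num_colors adj col ->
  ~ has_rainbow_triangle adj col ->
  in_G0 adj col.
Proof.
move=> [Hsym Hirr] Hcol hV hC HnoR.
have hT : #|[set: V]| = (#|V|.-1).+1 by rewrite cardsT; move: hV; clear; lia.
have [_ eqc] := bound_aux Hsym Hirr Hcol HnoR hT.
have ne : num_edges adj = eS adj [set: V].
  rewrite /num_edges /eS.
  have -> : [set p : V * V | adj p.1 p.2] = EP adj [set: V] by apply/setP => p; rewrite !inE.
  by [].
have hC' : 'C((#|V|.-1).+2, 2) <= eS adj [set: V] + size (colors_in adj col [set: V]) + 1.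
  move: hC; rewrite ne /num_colors.
  have -> : #|V|.+1 = (#|V|.-1).+2 by move: hV; clear; lia.
  move: ('C(_, 2)) (eS _ _) (size _) => a b c; clear; lia.
have [cT hc] := eqc hC'.
split => //.
apply: (G0_aux Hsym Hirr Hcol HnoR (n := #|V|.-1)) => //; rewrite hT //.
Qed.
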